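(* Let $(N,C,\mathbf{A},k)$ be an instance with $|N|=n$ and let $\lambda\in[0,\frac{n}{k^2})$. Every committee output by $\lambda$-LS-PAV (from any initial committee) — i.e., every $W\subseteq C$ with $|W|=k$ such that there are no $c^+\in C\setminus W$, $c^-\in W$ with $\Delta(W,c^+,c^-)\ge\lambda$ — has EJR degree at least $\frac{n}{k(k+1)}-\lambda\frac{k}{k+1}$.
   Context: An instance consists of voters $N=\{1,\dots,n\}$, candidates $C$, approval ballots $A_i\subseteq C$ for $i\in N$, and a committee size $k$ with $1\le k\le|C|$. For $\ell\in\mathbb{N}$, $N'\subseteq N$ is an $\ell$-cohesive group if $|N'|\ge\ell n/k$ and $|\bigcap_{i\in N'}A_i|\ge\ell$. A size-$k$ committee $W$ achieves EJR degree $c$ if for every $\ell\in\{1,\dots,k\}$ every $\ell$-cohesive group contains at least $c$ voters $i$ with $|A_i\cap W|\ge\ell$. The PAV-score of $W$ is $s_{\mathrm{PAV}}(W)=\sum_{i=1}^n\sum_{j=1}^{|A_i\cap W|}\frac1j$, and $\Delta(W,c^+,c^-)=s_{\mathrm{PAV}}((W\setminus\{c^-\})\cup\{c^+\})-s_{\mathrm{PAV}}(W)$. The algorithm $\lambda$-LS-PAV starts from an arbitrary size-$k$ committee $W$ and, while there exist $c^+\notin W$ and $c^-\in W$ with $\Delta(W,c^+,c^-)\ge\lambda$, replaces $W$ by $(W\setminus\{c^-\})\cup\{c^+\}$; it then outputs $W$. *)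

(* Defs.v *)
From HB Require Import structures.
From mathcomp Require Import all_boot all_order all_algebra.
Set Implicit Arguments. Unset Strict Implicit. Unset Printing Implicit Defensive.
Import Order.TTheory GRing.Theory Num.Theory.
Local Open Scope ring_scope.

Section Defs.
Variables (R : realFieldType) (C : finType) (n : nat).

Definition harmonic (m : nat) : R := \sum_(1 <= j < m.+1) (j%:R)^-1.

Definition pav_score (A : 'I_n -> {set C}) (W : {set C}) : R :=
  \sum_(i < n) harmonic #|A i :&: W|.

Definition pav_delta (A : 'I_n -> {set C}) (W : {set C}) (cp cm : C) : R :=
  pav_score A (cp |: (W :\ cm)) - pav_score A W.

Definition cohesive (A : 'I_n -> {set C}) (k l : nat) (N' : {set 'I_n}) : Prop :=
  (l%:R * n%:R / k%:R <= (#|N'|%:R : R)) /\ (l <= #|\bigcap_(i in N') A i|)%N.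

Definition ejr_degree (A : 'I_n -> {set C}) (k : nat) (W : {set C}) (c : R) : Prop :=
  forall l : nat, (1 <= l <= k)%N -> forall N' : {set 'I_n},
    cohesive A k l N' ->
    c <= (#|[set i in N' | (l <= #|A i :&: W|)%N]|%:R : R).

Definition ls_pav_output (A : 'I_n -> {set C}) (k : nat) (lam : R) (W : {set C}) : Prop :=
  #|W| = k /\ forall cp cm : C, cp \notin W -> cm \in W -> pav_delta A W cp cm < lam.

End Defs.

(* Main.v *)
Require Import Defs.
From HB Require Import structures.
From mathcomp Require Import all_boot all_order all_algebra.
From mathcomp Require Import zify ring lra.
Import Order.TTheory GRing.Theory Num.Theory.
Local Open Scope ring_scope.

Lemma harmonicS (R : realFieldType) m : harmonic R m.+1 = harmonic R m + (m.+1%:R)^-1.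
Proof. by rewrite /harmonic big_nat_recr. Qed.

Lemma card_swap (C : finType) (S W : {set C}) cp cm : cp \notin W -> cm \in W ->
  #|S :&: (cp |: (W :\ cm))| = ((cp \in S) + (#|S :&: W| - (cm \in S)))%N.
Proof.
move=> cpW cmW.
have h1 : #|S :&: (W :\ cm)| = (#|S :&: W| - (cm \in S))%N.
  rewrite setIDA (cardsD1 cm (S :&: W)) inE cmW andbT; lia.
rewrite -h1.
have cpX : cp \notin S :&: (W :\ cm) by rewrite !inE (negPf cpW) !andbF.
case: (boolP (cp \in S)) => cpS.
  have -> : S :&: (cp |: (W :\ cm)) = cp |: (S :&: (W :\ cm)).
    apply/setP => x; rewrite !inE; case: eqP => [->|] //; by rewrite cpS.
  by rewrite cardsU1 cpX.
have -> : S :&: (cp |: (W :\ cm)) = S :&: (W :\ cm).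
  apply/setP => x; rewrite !inE; case: eqP => [->|] //; by rewrite (negPf cpS).
by [].
Qed.

Lemma sum_if (R : realFieldType) (C : finType) (W S : {set C}) (al be : R) :
  \sum_(cm in W) (if cm \in S then al else be) = al *+ #|S :&: W| + be *+ (#|W| - #|S :&: W|).
Proof.
rewrite (bigID (mem S)) /= [in RHS]setIC -(cardsD W S) -!sumr_const.
congr (_ + _).
  apply: eq_big => [i|i /andP[_ ->]//]; by rewrite !inE andbC.
apply: eq_big => [i|i /andP[_ h]]; first by rewrite !inE andbC.
by rewrite (negbTE h).
Qed.

Lemma voter_sum (R : realFieldType) (C : finType) (S W : {set C}) cp : cp \notin W ->
  \sum_(cm in W) (harmonic R #|S :&: (cp |: (W :\ cm))| - harmonic R #|S :&: W|) =
  if cp \in S then (#|W| - #|S :&: W|)%:R / (#|S :&: W|.+1)%:R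
  else (if #|S :&: W| == 0%N then 0 else -1).
Proof.
move=> cpW.
rewrite (eq_bigr (fun cm => if cm \in S then harmonic R ((cp \in S) + (#|S :&: W| - 1)) - harmonic R #|S :&: W|
   else harmonic R ((cp \in S) + #|S :&: W|) - harmonic R #|S :&: W|)); last first.
  by move=> cm cmW; rewrite card_swap //; case: (cm \in S); rewrite ?subn0.
rewrite sum_if.
case: (#|S :&: W|) => [|b]; case: (cp \in S).
- rewrite mulr0n add0r add1n (harmonicS R 0) addrAC subrr add0r -mulr_natr mulrC subn0.
  by rewrite mulr1 invr1 -mulr_natr mul1r mulr1.
- by rewrite /= !mulr0n add0r add0n subrr mul0rn.
- rewrite subn1 /= add1n subrr mul0rn add0r add1n (harmonicS R b.+1) addrAC subrr add0r.
  by rewrite -[LHS]mulr_natr mulrC.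
- rewrite subn1 /= ?add0n subrr mul0rn addr0 (harmonicS R b) opprD addrA subrr add0r.
  rewrite -[LHS]mulr_natr mulNr mulVf //.
  by rewrite pnatr_eq0.
Qed.

Lemma alg (R : realFieldType) (k l n lam b m : R) : 1 <= k -> 1 <= l -> 0 <= m ->
  l * n / k <= b + m -> (k + 1) / l * b - n <= lam * k ->
  n / (k * (k + 1)) - lam * (k / (k + 1)) <= m.
Proof.
move=> hk hl hm h1 h2.
have k0 : 0 < k by apply: lt_le_trans hk; rewrite ltr01.
have l0 : 0 < l by apply: lt_le_trans hl; rewrite ltr01.
have k10 : 0 < k + 1 by lra.
set x := n / k. set y := b / l.
have hn : n = k * x by rewrite /x mulrC divfK // gt_eqF.
have hb : b = l * y by rewrite /y mulrC divfK // gt_eqF.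
have hx : x <= y + m.
  have : l * (x - y - m) <= 0.
    have : l * n / k = l * x by rewrite /x mulrA.
    have : m <= l * m by rewrite -[X in X <= _]mul1r ler_wpM2r.
    nra.
  rewrite pmulr_rle0 //; lra.
have e : n / (k * (k + 1)) - lam * (k / (k + 1)) = (x - lam * k) / (k + 1).
  by rewrite /x; field; rewrite !gt_eqF.
rewrite e ler_pdivrMr //.
have : (k + 1) / l * b = (k + 1) * y by rewrite hb /y; field; rewrite gt_eqF.
nra.
Qed.

Theorem proposition3 (R : realFieldType) (C : finType) (n : nat)
    (A : 'I_n -> {set C}) (k : nat) (lam : R) (W : {set C}) :
  (1 <= k)%N -> (k <= #|C|)%N ->
  0 <= lam -> lam < n%:R / (k%:R ^+ 2) ->
  ls_pav_output A k lam W ->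
  ejr_degree A k W (n%:R / (k%:R * (k%:R + 1)) - lam * (k%:R / (k%:R + 1))).
Proof.
move=> hk hkC hlam hlamlt [hW hswap] l /andP[hl1 hlk] N' [hsz hT].
set T := \bigcap_(i in N') A i in hT.
set P := [set i | (l <= #|A i :&: W|)%N].
have eG : [set i in N' | (l <= #|A i :&: W|)%N] = N' :&: P by apply/setP => i; rewrite !inE.
rewrite eG.
have kR1 : (1 : R) <= k%:R by rewrite ler1n.
have lR1 : (1 : R) <= l%:R by rewrite ler1n.
have k0 : (0 : R) < k%:R by rewrite ltr0n.
case: (boolP (T \subset W)) => [TW|].
  have sub : N' \subset N' :&: P.
    apply/subsetP => i iN; rewrite inE iN inE /=.
    apply: leq_trans hT _; apply: subset_leq_card; apply/subsetP => x xT.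
    by rewrite inE (subsetP (bigcap_inf _ iN) x xT) (subsetP TW x xT).
  apply: (@le_trans _ _ (#|N'|%:R)); last by rewrite ler_nat subset_leq_card.
  apply: le_trans _ hsz.
  set x := (n%:R / k%:R : R).
  have x0 : 0 <= x by rewrite /x divr_ge0.
  have e1 : n%:R / (k%:R * (k%:R + 1)) = x / (k%:R + 1) :> R.
    by rewrite /x; field; rewrite !gt_eqF // ?ltr0n //; lra.
  have e2 : l%:R * n%:R / k%:R = l%:R * x :> R by rewrite /x mulrA.
  have e3 : x / (k%:R + 1) <= x by rewrite ler_pdivrMr; [nra | lra].
  have e4 : 0 <= lam * (k%:R / (k%:R + 1)) by rewrite mulr_ge0 // divr_ge0 //; lra.
  rewrite e1 e2; nra.
case/subsetPn => cp cpT cpW.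
have cpA : forall i, i \in N' -> cp \in A i.
  by move=> i iN; apply: (subsetP (bigcap_inf _ iN)).
set Bad := N' :\: P.
have hcard : (#|N' :&: P| + #|Bad|)%N = #|N'| := cardsID P N'.
have hsum_le : \sum_(cm in W) pav_delta R A W cp cm <= lam * k%:R.
  apply: (@le_trans _ _ (\sum_(cm in W) lam)).
    by apply: ler_sum => cm cmW; apply: ltW; apply: hswap.
  by rewrite sumr_const hW mulr_natr.
have hsum_eq : \sum_(cm in W) pav_delta R A W cp cm = \sum_(i < n) \sum_(cm in W)
   (harmonic R #|A i :&: (cp |: (W :\ cm))| - harmonic R #|A i :&: W|).
  rewrite exchange_big /=; apply: eq_bigr => cm _.
  by rewrite /pav_delta /pav_score -sumrB.
have hv : forall i : 'I_n, (if i \in Bad then (k%:R + 1) / l%:R else 0) - 1 <=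
   \sum_(cm in W) (harmonic R #|A i :&: (cp |: (W :\ cm))| - harmonic R #|A i :&: W|).
  move=> i; rewrite voter_sum //.
  have aW : (#|A i :&: W| <= k)%N by rewrite -hW subset_leq_card // subsetIr.
  case: (boolP (cp \in A i)) => cpi.
    rewrite hW natrB //.
    set a := #|A i :&: W| in aW *.
    have a0 : (0 : R) < a.+1%:R by rewrite ltr0n.
    have e : (k%:R - a%:R) / a.+1%:R = (k%:R + 1) / a.+1%:R - 1 :> R.
      by rewrite -natr1; field; rewrite -natr1 in a0; rewrite gt_eqF.
    rewrite e.
    case: ifP => iB.
      have al : (a.+1 <= l)%N.
        by move: iB; rewrite /Bad /P !inE => /andP[/negP h _]; rewrite ltnNge; apply/negP.
      have alR : (a.+1%:R : R) <= l%:R by rewrite ler_nat.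
      set q := (k%:R + 1) / a.+1%:R.
      have q0 : 0 <= q by rewrite /q divr_ge0 //; lra.
      have hq : k%:R + 1 = q * a.+1%:R by rewrite /q divfK // gt_eqF.
      have l0 : (0 : R) < l%:R by lra.
      suff : (k%:R + 1) / l%:R <= q by lra.
      rewrite ler_pdivrMr // hq; nra.
    rewrite lerD2r divr_ge0 //; lra.
  have iB : i \notin Bad.
    rewrite /Bad inE negb_and negbK; apply/orP; right; apply/negP => iN.
    by move: cpi; rewrite (cpA i iN).
  rewrite (negbTE iB); case: ifP => _; lra.
have hsumg : \sum_(i < n) ((if i \in Bad then (k%:R + 1) / l%:R else 0) - 1)
   = (k%:R + 1) / l%:R * #|Bad|%:R - n%:R :> R.
  rewrite sumrB -big_mkcond /= !sumr_const card_ord mulr_natr.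
  by [].
have key : (k%:R + 1) / l%:R * #|Bad|%:R - n%:R <= lam * k%:R.
  rewrite -hsumg; apply: le_trans hsum_le; rewrite hsum_eq.
  by apply: ler_sum => i _; apply: hv.
apply: (@alg R _ _ _ _ _ _ kR1 lR1 (ler0n _ _) _ key).
by rewrite -natrD addnC hcard.
Qed.
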